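(* Let $\mathbf D_0\in\mathbb R^{m\times p}$ have unit-norm columns, $\mathbf W\in\mathcal W_{\mathbf D_0}$, $\mathbf v\in\mathcal S^p$, and write $\mathbf D(t')=\mathbf D(\mathbf W,\mathbf v,t')$. Let $\mathbf x\in\mathbb R^m$, and $\boldsymbol\alpha_0\in\mathbb R^p$ with support $J$, $|J|=k$. Assume $k\mu(t)\le1/2$, $0\le t'\le t$, $\frac94\lambda\le\underline\alpha\le\min_{j\in J}|[\boldsymbol\alpha_0]_j|$ with $\lambda>0$, and $$\|[\mathbf D(t')]_J^\top(\mathbf x-\mathbf D(t')\boldsymbol\alpha_0)\|_\infty<\lambda(2-Q_t^2),\qquad\|[\mathbf D(t')]_{J^c}^\top(\mathbf I-\mathbf P_J(t'))\mathbf x\|_\infty<\lambda(2-Q_t^2).$$ Then the vector $\hat{\boldsymbol\alpha}(t')$ given by $\hat{\boldsymbol\alpha}(t')_J=([\mathbf D(t')]_J^\top[\mathbf D(t')]_J)^{-1}([\mathbf D(t')]_J^\top\mathbf x-\lambda\,\mathrm{sign}([\boldsymbol\alpha_0]_J))$, $\hat{\boldsymbol\alpha}(t')_{J^c}=\mathbf 0$, is the unique solution of $\min_{\boldsymbol\alpha\in\mathbb R^p}\frac12\|\mathbf x-\mathbf D(t')\boldsymbol\alpha\|_2^2+\lambda\|\boldsymbol\alpha\|_1$.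
   Context: $\mu_0=\max_{i\ne j}|[\mathbf d_0^i]^\top\mathbf d_0^j|$, $\mu(t)=\mu_0+3t$, $Q_t=1/\sqrt{1-k\mu(t)}$. $\mathcal S^p$ unit sphere; $\mathcal W_{\mathbf D_0}=\{\mathbf W:\mathrm{diag}(\mathbf W^\top\mathbf D_0)=\mathbf 0,\mathrm{diag}(\mathbf W^\top\mathbf W)=\mathbf 1\}$; $\mathbf D(\mathbf W,\mathbf v,t)=\mathbf D_0\mathrm{Diag}[\cos(\mathbf vt)]+\mathbf W\mathrm{Diag}[\sin(\mathbf vt)]$. $\mathbf M_J$ denotes the columns indexed by $J$; $\mathbf P_J(t')$ is the orthogonal projector onto the span of $[\mathbf D(t')]_J$. *)

(* Defs.v *)
From HB Require Import structures.
From mathcomp Require Import all_boot all_order all_algebra.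
From mathcomp Require Import reals trigo.
Set Implicit Arguments. Unset Strict Implicit. Unset Printing Implicit Defensive.
Import Order.TTheory GRing.Theory Num.Theory.
Local Open Scope ring_scope.

Section Defs.
Variable R : realType.

Definition dotc n (u w : 'cV[R]_n) : R := \sum_i u i 0 * w i 0.
Definition sqnorm2 n (u : 'cV[R]_n) : R := \sum_i u i 0 ^+ 2.
Definition norm1 n (u : 'cV[R]_n) : R := \sum_i `|u i 0|.

Definition unit_cols m p (D : 'M[R]_(m, p)) : Prop :=
  forall j : 'I_p, sqnorm2 (col j D) = 1.

Definition in_W m p (D0 W : 'M[R]_(m, p)) : Prop :=
  (forall j : 'I_p, dotc (col j W) (col j D0) = 0) /\
  (forall j : 'I_p, dotc (col j W) (col j W) = 1).

Definition on_sphere p (v : 'cV[R]_p) : Prop := sqnorm2 v = 1.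

Definition Dcurve m p (D0 W : 'M[R]_(m, p)) (v : 'cV[R]_p) (t : R) : 'M[R]_(m, p) :=
  \matrix_(i, j) (D0 i j * cos (v j 0 * t) + W i j * sin (v j 0 * t)).

(* mutual coherence mu_0 = max_{i <> j} |d_i^T d_j|  (0 if p <= 1) *)
Definition mu0 m p (D0 : 'M[R]_(m, p)) : R :=
  \big[Num.max/0]_(i < p) \big[Num.max/0]_(j < p | i != j)
     `|dotc (col i D0) (col j D0)|.

Definition mu m p (D0 : 'M[R]_(m, p)) (t : R) : R := mu0 D0 + 3 * t.

Definition Qt m p (D0 : 'M[R]_(m, p)) (k : nat) (t : R) : R :=
  1 / Num.sqrt (1 - k%:R * mu D0 t).

(* selection matrix: S_J e_i = e_{enum_val i}, so  M_J = M *m S_J *)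
Definition selJ p (J : {set 'I_p}) : 'M[R]_(p, #|J|) :=
  \matrix_(j, i) ((j == enum_val i)%:R).

Definition colsJ m p (J : {set 'I_p}) (M : 'M[R]_(m, p)) : 'M[R]_(m, #|J|) :=
  M *m selJ J.

Definition projJ m p (J : {set 'I_p}) (M : 'M[R]_(m, p)) : 'M[R]_m :=
  colsJ J M *m invmx ((colsJ J M)^T *m colsJ J M) *m (colsJ J M)^T.

Definition alpha_hat m p (J : {set 'I_p}) (M : 'M[R]_(m, p)) (x : 'cV[R]_m)
  (lam : R) (a0 : 'cV[R]_p) : 'cV[R]_p :=
  selJ J *m (invmx ((colsJ J M)^T *m colsJ J M) *m
     ((colsJ J M)^T *m x - lam *: map_mx Num.sg ((selJ J)^T *m a0))).

Definition lasso_obj m p (M : 'M[R]_(m, p)) (x : 'cV[R]_m) (lam : R)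
  (a : 'cV[R]_p) : R :=
  2^-1 * sqnorm2 (x - M *m a) + lam * norm1 a.

Definition unique_minimizer p (f : 'cV[R]_p -> R) (a : 'cV[R]_p) : Prop :=
  (forall b, f a <= f b) /\ (forall b, f b <= f a -> b = a).

End Defs.

(* Main.v *)
Require Import Defs.
From HB Require Import structures.
From mathcomp Require Import all_boot all_order all_algebra.
From mathcomp Require Import reals trigo.
From mathcomp Require Import ring lra.
Import Order.TTheory GRing.Theory Num.Theory.
Local Open Scope ring_scope.
Set Implicit Arguments. Unset Strict Implicit. Unset Printing Implicit Defensive.

Section Helpers.
Variable R : realType.

Lemma sum_delta (T : finType) (e : T) (F : T -> R) :
  \sum_j (j == e)%:R * F j = F e.
Proof.
rewrite (bigD1 e) //= eqxx mul1r big1 ?addr0 // => j /negbTE ->; by rewrite mul0r.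
Qed.

Lemma dotc_col m p (D : 'M[R]_(m, p)) j (w : 'cV[R]_m) :
  dotc (col j D) w = (D^T *m w) j 0.
Proof. by rewrite /dotc !mxE; apply: eq_bigr => i _; rewrite !mxE. Qed.

Lemma selJ_tr p (J : {set 'I_p}) (w : 'cV[R]_p) i :
  ((selJ R J)^T *m w) i 0 = w (enum_val i) 0.
Proof.
rewrite !mxE -(sum_delta (enum_val i) (fun j => w j 0)).
by apply: eq_bigr => j _; rewrite !mxE.
Qed.

Lemma selJ_in p (J : {set 'I_p}) (z : 'cV[R]_#|J|) i :
  (selJ R J *m z) (enum_val i) 0 = z i 0.
Proof.
rewrite !mxE -(sum_delta i (fun j => z j 0)).
by apply: eq_bigr => j _; rewrite !mxE (inj_eq enum_val_inj) eq_sym.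
Qed.

Lemma selJ_out p (J : {set 'I_p}) (z : 'cV[R]_#|J|) j :
  j \notin J -> (selJ R J *m z) j 0 = 0.
Proof.
move=> hj; rewrite !mxE big1 // => i _; rewrite !mxE.
case: eqP => [E|]; last by rewrite mul0r.
by move: hj; rewrite E enum_valP.
Qed.

Lemma selJ_supp p (J : {set 'I_p}) (w : 'cV[R]_p) :
  (forall j, j \notin J -> w j 0 = 0) -> selJ R J *m ((selJ R J)^T *m w) = w.
Proof.
move=> hw; apply/matrixP => j c; rewrite (ord1 c).
case: (boolP (j \in J)) => hj; last by rewrite selJ_out // hw.
by rewrite -(enum_rankK_in hj hj) selJ_in selJ_tr.
Qed.

Lemma DS_entry m p (J : {set 'I_p}) (D : 'M[R]_(m, p)) r i :
  (D *m selJ R J) r i = D r (enum_val i).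
Proof.
rewrite !mxE -(sum_delta (enum_val i) (fun j => D r j)).
by apply: eq_bigr => j _; rewrite !mxE mulrC.
Qed.

Lemma dom_lemma n (G : 'M[R]_n) (mu : R) (y : 'cV[R]_n) :
  (forall i, G i i = 1) -> (forall i j, i != j -> `|G i j| <= mu) ->
  0 <= mu -> n%:R * mu <= 1 ->
  forall i, exists i0, (1 - n%:R * mu) * `|y i 0| <= `|(G *m y) i0 0|.
Proof.
move=> Gd Go mu0 nmu i.
have [i0 _ Hmax] := @arg_maxP _ _ _ i xpredT (fun j => `|y j 0|) erefl.
set M := `|y i0 0| in Hmax *; exists i0.
have hM : forall j, `|y j 0| <= M by move=> j; exact: Hmax.
have h1 : (1 - n%:R * mu) * M <= `|(G *m y) i0 0|.
  rewrite mxE (bigD1 i0) //= Gd mul1r.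
  have hs : `|\sum_(j | j != i0) G i0 j * y j 0| <= n%:R * mu * M.
    apply: (le_trans (ler_norm_sum _ _ _)).
    apply: (@le_trans _ _ (\sum_(j | j != i0) mu * M)).
      apply: ler_sum => j hj; rewrite normrM; apply: ler_pM => //.
      by apply: Go; rewrite eq_sym.
    apply: (@le_trans _ _ (\sum_(j < n) mu * M)).
      rewrite [X in _ <= X](bigD1 i0) //= lerDr.
      by apply: mulr_ge0 => //; rewrite /M normr_ge0.
    by rewrite sumr_const card_ord -mulrA mulr_natl.
  apply: le_trans (lerB_normD _ _).
  rewrite mulrBl mul1r; apply: lerB => //.
apply: le_trans h1; apply: ler_wpM2l; last exact: hM.
by rewrite subr_ge0.
Qed.

Lemma unit_of_dom n (G : 'M[R]_n) (mu : R) :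
  (forall i, G i i = 1) -> (forall i j, i != j -> `|G i j| <= mu) ->
  0 <= mu -> n%:R * mu < 1 -> G \in unitmx.
Proof.
move=> Gd Go mu0 nmu; rewrite -row_free_unit; apply: inj_row_free => w hw.
have GT : G^T *m w^T = 0 by rewrite -trmx_mul hw trmx0.
apply/rowP => i; rewrite !mxE.
have Gd' : forall j, G^T j j = 1 by move=> j; rewrite mxE Gd.
have Go' : forall j j', j != j' -> `|G^T j j'| <= mu.
  by move=> j j' h; rewrite mxE; apply: Go; rewrite eq_sym.
have [i0] := @dom_lemma n G^T mu w^T Gd' Go' mu0 (ltW nmu) i.
rewrite GT !mxE normr0 => h.
have : `|w 0 i| <= 0.
  by rewrite -(pmulr_rle0 _ (_ : 0 < 1 - n%:R * mu)) // subr_gt0.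
by rewrite normr_le0 => /eqP.
Qed.

Lemma sg_agree (a y : R) : `|y - a| < `|a| -> Num.sg a * y = `|y|.
Proof.
case: (ltrgt0P a) => ha.
- rewrite ltr_norml => /andP[h1 h2].
  by rewrite gtr0_sg // mul1r gtr0_norm //; lra.
- rewrite ltr_norml => /andP[h1 h2].
  by rewrite ltr0_sg // mulN1r ltr0_norm //; lra.
- by rewrite ltNge normr_ge0.
Qed.

Lemma sqnorm2B m (r w : 'cV[R]_m) :
  sqnorm2 (r - w) = sqnorm2 r - 2 * (\sum_i r i 0 * w i 0) + sqnorm2 w.
Proof.
rewrite /sqnorm2 mulr_sumr -sumrB -big_split /=; apply: eq_bigr => i _.
rewrite !mxE; ring.
Qed.

Lemma cross m p (D : 'M[R]_(m, p)) (r : 'cV[R]_m) (h : 'cV[R]_p) :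
  \sum_i r i 0 * (D *m h) i 0 = \sum_j h j 0 * (D^T *m r) j 0.
Proof.
under eq_bigr do rewrite mxE mulr_sumr.
rewrite exchange_big; apply: eq_bigr => j _; rewrite mxE mulr_sumr.
by apply: eq_bigr => i _; rewrite mxE; ring.
Qed.

Lemma sqnorm2_ge0 m (w : 'cV[R]_m) : 0 <= sqnorm2 w.
Proof. by apply: sumr_ge0 => i _; rewrite sqr_ge0. Qed.

Lemma sqnorm2_eq0 m (w : 'cV[R]_m) : sqnorm2 w = 0 -> w = 0.
Proof.
move=> h; apply/matrixP => i c; rewrite (ord1 c) mxE.
have := @psumr_eq0P _ _ xpredT (fun i => w i 0 ^+ 2) (fun i _ => sqr_ge0 _) h i isT.
by move/eqP; rewrite sqrf_eq0 => /eqP.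
Qed.

End Helpers.

Section Main.
Variable R : realType.

Lemma mxBE m n (A B : 'M[R]_(m, n)) i j : (A - B) i j = A i j - B i j.
Proof. by rewrite !mxE. Qed.
Lemma mxDE m n (A B : 'M[R]_(m, n)) i j : (A + B) i j = A i j + B i j.
Proof. by rewrite !mxE. Qed.
Lemma mxZE m n (a : R) (A : 'M[R]_(m, n)) i j : (a *: A) i j = a * A i j.
Proof. by rewrite !mxE. Qed.
Lemma sg_le1 (a : R) : `|Num.sg a| <= 1.
Proof. by rewrite normr_sg; case: (a != 0). Qed.

Lemma main_lasso m p (D : 'M[R]_(m, p)) (x : 'cV[R]_m) (a0 : 'cV[R]_p)
  (J : {set 'I_p}) (lam abar mu : R) :
  (forall j, dotc (col j D) (col j D) = 1) ->
  (forall i j, i != j -> `|dotc (col i D) (col j D)| <= mu) ->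
  0 <= mu -> #|J|%:R * mu <= 2^-1 ->
  J = [set j | a0 j 0 != 0] -> 0 < lam -> 9 / 4 * lam <= abar ->
  (forall j, j \in J -> abar <= `|a0 j 0|) ->
  (forall j, j \in J -> `|dotc (col j D) (x - D *m a0)|
       < lam * (2 - (1 - #|J|%:R * mu)^-1)) ->
  (forall j, j \notin J -> `|dotc (col j D) ((1%:M - projJ J D) *m x)|
       < lam * (2 - (1 - #|J|%:R * mu)^-1)) ->
  unique_minimizer (lasso_obj D x lam) (alpha_hat J D x lam a0).
Proof.
move=> Hn Hc mu0 kmu HJ lam0 Habar Ha0 H1 H2.
set e := 1 - #|J|%:R * mu in H1 H2.
set q := e^-1 in H1 H2.
have e0 : 0 < e by rewrite /e; lra.
have qe : q * e = 1 by rewrite /q mulVf // gt_eqF.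
have q0 : 0 < q by rewrite /q invr_gt0.
set S := selJ R J.
set DJ := colsJ J D.
have DJE : DJ = D *m S by [].
set G := DJ^T *m DJ.
have DJt : forall (w : 'cV[R]_m) i, (DJ^T *m w) i 0 = dotc (col (enum_val i) D) w.
  by move=> w i; rewrite DJE trmx_mul -mulmxA selJ_tr dotc_col.
have GE : forall i i', G i i' = dotc (col (enum_val i) D) (col (enum_val i') D).
  move=> i i'; rewrite /G !mxE /dotc; apply: eq_bigr => r _.
  by rewrite [DJ^T i r]mxE DJE !DS_entry !mxE.
have Gd : forall i, G i i = 1 by move=> i; rewrite GE Hn.
have Go : forall i i', i != i' -> `|G i i'| <= mu.
  by move=> i i' h; rewrite GE; apply: Hc; rewrite (inj_eq enum_val_inj).
have kmu1 : #|J|%:R * mu <= 1 by lra.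
have Gu : G \in unitmx by apply: (unit_of_dom Gd Go mu0); lra.
have domG := fun y => @dom_lemma R _ G mu y Gd Go mu0 kmu1.
have supp : forall j, j \notin J -> a0 j 0 = 0.
  by move=> j; rewrite HJ inE negbK => /eqP.
set sJ := map_mx Num.sg (S^T *m a0).
have sJE : forall i, sJ i 0 = Num.sg (a0 (enum_val i) 0).
  by move=> i; rewrite mxE selJ_tr.
set u := DJ^T *m x - lam *: sJ.
set y := invmx G *m u.
have ahE : alpha_hat J D x lam a0 = S *m y by [].
rewrite ahE.
set r := x - D *m (S *m y).
set c := D^T *m r.
have cdot : forall j, c j 0 = dotc (col j D) r by move=> j; rewrite dotc_col.
have Gy : G *m y = u by rewrite /y mulKVmx.
have DJr : DJ^T *m r = lam *: sJ.
  rewrite /r mulmxBr [D *m (S *m y)]mulmxA -DJE [DJ^T *m (DJ *m y)]mulmxA Gy /u.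
  by rewrite opprB addrC subrK.
have cJ : forall i : 'I_#|J|, c (enum_val i) 0 = lam * Num.sg (a0 (enum_val i) 0).
  move=> i; have := congr1 (fun M : 'cV[R]_#|J| => M i 0) DJr.
  by rewrite /= DJt -cdot mxZE sJE.
have SSa : S *m (S^T *m a0) = a0 := selJ_supp supp.
have sgn : forall i : 'I_#|J|, Num.sg (a0 (enum_val i) 0) * y i 0 = `|y i 0|.
  move=> i; apply: sg_agree.
  set w := y - S^T *m a0.
  have e1 : G *m (S^T *m a0) = DJ^T *m (D *m a0).
    by rewrite /G -mulmxA DJE -(mulmxA D) SSa.
  have Gw : G *m w = DJ^T *m (x - D *m a0) - lam *: sJ.
    by rewrite /w mulmxBr Gy e1 /u mulmxBr addrAC.
  have hz : forall i0, `|(G *m w) i0 0| < lam * (3 - q).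
    move=> i0; rewrite Gw mxBE DJt mxZE sJE.
    apply: (le_lt_trans (ler_normB _ _)).
    have := H1 _ (enum_valP i0).
    have : `|lam * Num.sg (a0 (enum_val i0) 0)| <= lam.
      by rewrite normrM (gtr0_norm lam0) ler_piMr // ?sg_le1 // ltW.
    lra.
  have [i0 hi0] := domG w i.
  have wi : w i 0 = y i 0 - a0 (enum_val i) 0 by rewrite /w mxBE selJ_tr.
  rewrite -wi.
  have := Ha0 _ (enum_valP i).
  have hW : `|w i 0| = q * (e * `|w i 0|) by rewrite mulrA qe mul1r.
  have h3 : q * (e * `|w i 0|) < q * (lam * (3 - q)).
    by rewrite ltr_pM2l //; apply: le_lt_trans (hz i0).
  have h4 : q * (lam * (3 - q)) <= 9 / 4 * lam.
    rewrite -subr_ge0.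
    have -> : 9 / 4 * lam - q * (lam * (3 - q)) = lam * (q - 3 / 2) ^+ 2 by field.
    by apply: mulr_ge0; [exact: ltW | exact: sqr_ge0].
  lra.
set g := invmx G *m sJ.
have Gg : G *m g = sJ by rewrite /g mulKVmx.
have gb : forall i, `|g i 0| <= q.
  move=> i; have [i0 h] := domG g i; move: h; rewrite Gg sJE => h.
  have hW : `|g i 0| = q * (e * `|g i 0|) by rewrite mulrA qe mul1r.
  rewrite hW -[X in _ <= X]mulr1 ler_pM2l //.
  exact: le_trans h (sg_le1 _).
have rE : r = (1%:M - projJ J D) *m x + lam *: (DJ *m g).
  have e2 : D *m (S *m y) = DJ *m invmx G *m DJ^T *m x - lam *: (DJ *m g).
    rewrite /y /u /g !mulmxBr -!scalemxAr !mulmxA -DJE.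
    done.
  rewrite /r e2 mulmxBl mul1mx opprB addrA addrAC.
  done.
have kq : #|J|%:R * mu * q = q - 1.
  by move: qe; rewrite /e => qe'; rewrite -{2}qe'; ring.
have cOut : forall j, j \notin J -> `|c j 0| < lam.
  move=> j hj.
  have ce : c j 0 = dotc (col j D) ((1%:M - projJ J D) *m x)
                   + lam * (D^T *m (DJ *m g)) j 0.
    by rewrite /c rE mulmxDr -scalemxAr mxDE mxZE dotc_col.
  have hb : `|(D^T *m (DJ *m g)) j 0| <= #|J|%:R * mu * q.
    rewrite mulmxA mxE.
    apply: (le_trans (ler_norm_sum _ _ _)).
    apply: (@le_trans _ _ (\sum_(i < #|J|) mu * q)); last first.
      by rewrite sumr_const card_ord -mulrA mulr_natl.
    apply: ler_sum => i _; rewrite normrM; apply: ler_pM => //.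
    have -> : (D^T *m DJ) j i = dotc (col j D) (col (enum_val i) D).
      rewrite mxE /dotc; apply: eq_bigr => r0 _.
      by rewrite /DJ /colsJ DS_entry !mxE.
    apply: Hc; apply/eqP => E; move: hj; rewrite E; by rewrite enum_valP.
  rewrite ce; apply: (le_lt_trans (ler_normD _ _)).
  have := H2 _ hj.
  have : `|lam * (D^T *m (DJ *m g)) j 0| <= lam * (#|J|%:R * mu * q).
    by rewrite normrM (gtr0_norm lam0) ler_pM2l.
  rewrite kq; lra.
set T := fun (b : 'cV[R]_p) j =>
  lam * (`|b j 0| - `|(S *m y) j 0|) - (b - S *m y) j 0 * c j 0.
have key : forall b, lasso_obj D x lam b - lasso_obj D x lam (S *m y) =
   2^-1 * sqnorm2 (D *m (b - S *m y)) + \sum_j T b j.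
  move=> b; set h := b - S *m y.
  have xb : x - D *m b = r - D *m h.
    by rewrite /h mulmxBr /r opprB addrA subrK.
  rewrite /lasso_obj xb sqnorm2B cross /norm1 /T sumrB -mulr_sumr sumrB.
  rewrite -/r -/c -/h.
  move: (sqnorm2 r) (sqnorm2 (D *m h)) (\sum_j h j 0 * c j 0) (\sum_i `|b i 0|) (\sum_i `|(S *m y) i 0|) => A1 A2 A3 A4 A5.
  by field.
have Tge : forall b j, 0 <= T b j /\ (j \notin J -> (lam - `|c j 0|) * `|b j 0| <= T b j).
  move=> b j; rewrite /T; case: (boolP (j \in J)) => hj.
    split => //.
    rewrite -(enum_rankK_in hj hj) selJ_in mxBE selJ_in cJ.
    set i := enum_rank_in hj j.
    set sg := Num.sg (a0 (enum_val i) 0).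
    have hs : sg * y i 0 = `|y i 0| by exact: sgn.
    have hb : sg * b (enum_val i) 0 <= `|b (enum_val i) 0|.
      apply: le_trans (ler_norm _) _; rewrite normrM.
      by rewrite -[X in _ <= X]mul1r ler_wpM2r // sg_le1.
    have -> : lam * (`|b (enum_val i) 0| - `|y i 0|) - (b (enum_val i) 0 - y i 0) * (lam * sg)
       = lam * (`|b (enum_val i) 0| - sg * b (enum_val i) 0) by rewrite -hs; ring.
    by apply: mulr_ge0; [exact: ltW | rewrite subr_ge0].
  rewrite mxBE !selJ_out // normr0 subr0 subr0.
  have hc := cOut j hj.
  have hb : b j 0 * c j 0 <= `|b j 0| * `|c j 0|.
    by rewrite -normrM ler_norm.
  have hbn : 0 <= `|b j 0| * `|c j 0| by apply: mulr_ge0.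
  have h0 : 0 <= (lam - `|c j 0|) * `|b j 0| by apply: mulr_ge0; [lra | exact: normr_ge0].
  by split; [|move=> _]; lra.
have A0 : forall b, 0 <= 2^-1 * sqnorm2 (D *m (b - S *m y)).
  by move=> b; apply: mulr_ge0; [rewrite invr_ge0; lra | exact: sqnorm2_ge0].
have B0 : forall b, 0 <= \sum_j T b j.
  by move=> b; apply: sumr_ge0 => j _; case: (Tge b j).
split.
  by move=> b; rewrite -subr_ge0 key; apply: addr_ge0.
move=> b hb.
have : lasso_obj D x lam b - lasso_obj D x lam (S *m y) <= 0 by rewrite subr_le0.
rewrite key => hle.
have hA := A0 b; have hB := B0 b.
have sq0 : sqnorm2 (D *m (b - S *m y)) = 0 by lra.
have sT0 : \sum_j T b j = 0 by lra.
set h := b - S *m y in sq0 sT0.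
have Dh0 := sqnorm2_eq0 sq0.
have Tz := @psumr_eq0P _ _ xpredT (T b) (fun j _ => proj1 (Tge b j)) sT0.
have hout : forall j, j \notin J -> h j 0 = 0.
  move=> j hj; have [_ hT] := Tge b j; have := hT hj; rewrite Tz // => h1.
  have hc := cOut j hj.
  have hbj : `|b j 0| <= 0.
    by rewrite -(pmulr_rle0 _ (_ : 0 < lam - `|c j 0|)) // subr_gt0.
  have : b j 0 = 0 by apply/eqP; rewrite -normr_le0.
  by rewrite /h mxBE selJ_out // subr0.
have hS : S *m (S^T *m h) = h := selJ_supp hout.
have Gh : G *m (S^T *m h) = 0.
  by rewrite /G -mulmxA DJE -(mulmxA D) hS Dh0 mulmx0.
have STh : S^T *m h = 0.
  apply/matrixP => i c0; rewrite (ord1 c0) [RHS]mxE.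
  have [i0] := domG (S^T *m h) i; rewrite Gh [X in _ <= `|X|]mxE normr0 => h1.
  have : `|(S^T *m h) i 0| <= 0 by rewrite -(pmulr_rle0 _ e0).
  by rewrite normr_le0 => /eqP.
have : h = 0 by rewrite -hS STh mulmx0.
by move/eqP; rewrite subr_eq0 => /eqP.
Qed.
End Main.

Module SinB.
From mathcomp Require Import boolp classical_sets functions ereal interval_inference topology normedtype landau sequences derive realfun exp.
Import numFieldTopology.Exports numFieldNormedType.Exports.
Lemma abs_sin_le (R : realType) (x : R) : `|sin x| <= `|x|.
Proof.
wlog x0: x / 0 <= x.
  move=> H; case: (leP 0 x) => [|/ltW]; first exact: H.
  by rewrite -oppr_ge0 => /H; rewrite sinN !normrN.
have [c _ E] : exists2 c, c \in `[0, x]%R & sin x - sin 0 = cos c * (x - 0).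
  apply: MVT_segment x0 (fun y _ => is_derive_sin y) _.
  by apply/continuous_subspaceT => ?; exact: continuous_sin.
move: E; rewrite sin0 !subr0 => ->.
rewrite normrM -[X in _ <= X]mul1r ler_wpM2r //; exact: cos_max.
Qed.
End SinB.

Section Curve.
Variable R : realType.

Lemma dotcC n (u w : 'cV[R]_n) : dotc u w = dotc w u.
Proof. by rewrite /dotc; apply: eq_bigr => i _; rewrite mulrC. Qed.

Lemma cs_unit n (u w : 'cV[R]_n) : dotc u u = 1 -> dotc w w = 1 -> `|dotc u w| <= 1.
Proof.
move=> hu hw.
have e1 : 0 <= dotc u u + dotc w w - 2 * dotc u w.
  have -> : dotc u u + dotc w w - 2 * dotc u w = \sum_i (u i 0 - w i 0) ^+ 2.
    rewrite /dotc mulr_sumr -big_split -sumrB /=; apply: eq_bigr => i _; ring.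
  by apply: sumr_ge0 => i _; exact: sqr_ge0.
have e2 : 0 <= dotc u u + dotc w w + 2 * dotc u w.
  have -> : dotc u u + dotc w w + 2 * dotc u w = \sum_i (u i 0 + w i 0) ^+ 2.
    rewrite /dotc mulr_sumr -!big_split /=; apply: eq_bigr => i _; ring.
  by apply: sumr_ge0 => i _; exact: sqr_ge0.
rewrite hu hw in e1 e2; rewrite ler_norml; apply/andP; split; lra.
Qed.

Lemma dotc_curve m p (D0 W : 'M[R]_(m, p)) (v : 'cV[R]_p) (t : R) i j :
  dotc (col i (Dcurve D0 W v t)) (col j (Dcurve D0 W v t)) =
    cos (v i 0 * t) * cos (v j 0 * t) * dotc (col i D0) (col j D0)
  + cos (v i 0 * t) * sin (v j 0 * t) * dotc (col i D0) (col j W)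
  + sin (v i 0 * t) * cos (v j 0 * t) * dotc (col i W) (col j D0)
  + sin (v i 0 * t) * sin (v j 0 * t) * dotc (col i W) (col j W).
Proof.
rewrite /dotc !mulr_sumr -!big_split /=; apply: eq_bigr => r _.
rewrite !mxE; ring.
Qed.

Lemma mu0_ge0 m p (D0 : 'M[R]_(m, p)) : 0 <= mu0 D0.
Proof. exact: bigmax_ge_id. Qed.

Lemma mu0_le m p (D0 : 'M[R]_(m, p)) i j : i != j ->
  `|dotc (col i D0) (col j D0)| <= mu0 D0.
Proof.
move=> hij; rewrite /mu0.
apply: le_trans (le_bigmax _ _ i).
apply: le_bigmax_cond; exact: hij.
Qed.

Lemma abs_v m (v : 'cV[R]_m) j : sqnorm2 v = 1 -> `|v j 0| <= 1.
Proof.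
move=> hv.
have h : v j 0 ^+ 2 <= 1.
  rewrite -hv /sqnorm2 (bigD1 j) //= lerDl.
  by apply: sumr_ge0 => i _; exact: sqr_ge0.
rewrite ler_norml; apply/andP; split; nra.
Qed.
End Curve.

Lemma nb3 (R : realType) (a b X A B C : R) :
  `|a| <= A -> `|b| <= B -> `|X| <= C -> `|a * b * X| <= A * B * C.
Proof.
move=> ha hb hX; rewrite !normrM; apply: ler_pM => //.
- by apply: mulr_ge0.
- by apply: ler_pM.
Qed.

Theorem corollary3 (R : realType) (m p : nat)
  (D0 W : 'M[R]_(m, p)) (v : 'cV[R]_p) (x : 'cV[R]_m) (a0 : 'cV[R]_p)
  (J : {set 'I_p}) (k : nat) (t t' lam abar : R) :
  unit_cols D0 ->
  in_W D0 W ->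
  on_sphere v ->
  J = [set j | a0 j 0 != 0] ->
  #|J| = k ->
  k%:R * mu D0 t <= 2^-1 ->
  0 <= t' -> t' <= t ->
  0 < lam ->
  9 / 4 * lam <= abar ->
  (forall j, j \in J -> abar <= `|a0 j 0|) ->
  (forall j, j \in J ->
     `|dotc (col j (Dcurve D0 W v t')) (x - Dcurve D0 W v t' *m a0)|
       < lam * (2 - Qt D0 k t ^+ 2)) ->
  (forall j, j \notin J ->
     `|dotc (col j (Dcurve D0 W v t')) ((1%:M - projJ J (Dcurve D0 W v t')) *m x)|
       < lam * (2 - Qt D0 k t ^+ 2)) ->
  unique_minimizer (lasso_obj (Dcurve D0 W v t') x lam)
    (alpha_hat J (Dcurve D0 W v t') x lam a0).
Proof.
move=> hD0 [hWD hWW] hv HJ Hk kmu t'0 tt lam0 Hab Ha0 H1 H2.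
subst k.
have m0 := mu0_ge0 D0.
have mu0' : 0 <= mu D0 t by rewrite /mu; lra.
have Qe : Qt D0 #|J| t ^+ 2 = (1 - #|J|%:R * mu D0 t)^-1.
  rewrite /Qt expr_div_n expr1n sqr_sqrtr ?div1r //; lra.
rewrite Qe in H1 H2.
have hDD : forall j, dotc (col j D0) (col j D0) = 1.
  move=> j; rewrite -(hD0 j) /sqnorm2 /dotc; apply: eq_bigr => i _; by rewrite expr2.
have hs : forall j, `|sin (v j 0 * t')| <= t'.
  move=> j; apply: le_trans (SinB.abs_sin_le _) _.
  rewrite normrM (ger0_norm t'0) -[X in _ <= X]mul1r ler_wpM2r //.
  exact: abs_v.
apply: (@main_lasso R m p _ x a0 J lam abar (mu D0 t)) => //.
- move=> j; rewrite dotc_curve hDD hWW (hWD j) dotcC (hWD j).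
  have := cos2Dsin2 (v j 0 * t'); rewrite !expr2 => h.
  by rewrite !mulr1 !mulr0 !addr0.
- move=> i j hij; rewrite dotc_curve.
  have t1 := nb3 (cos_max (v i 0 * t')) (cos_max (v j 0 * t')) (mu0_le D0 hij).
  have t2 := nb3 (cos_max (v i 0 * t')) (hs j) (cs_unit (hDD i) (hWW j)).
  have t3 := nb3 (hs i) (cos_max (v j 0 * t')) (cs_unit (hWW i) (hDD j)).
  have t4 := nb3 (hs i) (sin_max (v j 0 * t')) (cs_unit (hWW i) (hWW j)).
  rewrite !mul1r !mulr1 in t1 t2 t3 t4.
  apply: le_trans (ler_normD _ _) _.
  apply: le_trans (lerD (ler_normD _ _) t4) _.
  apply: le_trans (lerD (lerD (ler_normD _ _) t3) (lexx _)) _.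
  rewrite /mu; lra.
Qed.
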